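(* Let $f:\mathbb{R}^n\to\mathbb{R}$, $\bar x\in\mathbb{R}^n$, $a\in\mathbb{R}$, $\Delta>0$, let $I$ be a finite index set, and for $i\in I$ let $y_i\in\mathbb{R}^n$ and $s_i\in\partial f(y_i)$. For $w\in\mathbb{R}^n$ put $$h(w;\bar x,a,y_i)=f(y_i)+\tfrac a2\|y_i-\bar x\|_2^2+\langle s_i+a(y_i-\bar x),w-y_i\rangle,\qquad m(w)=\max_{i\in I}h(w;\bar x,a,y_i),$$ and $E_i=f(\bar x)-h(\bar x;\bar x,a,y_i)$ for $i\in I$. Assume there is $\bar i\in I$ with $y_{\bar i}=\bar x$ and that $E_i\ge0$ for all $i\in I$. Let $(x^*,z^* )$ be an optimal solution of the linear program $$\min_{(x,z)\in\mathbb{R}^{n+1}} z\quad\text{s.t.}\quad h(x;\bar x,a,y_i)\le z\ (i\in I),\qquad \|x-\bar x\|_\infty\le\Delta,$$ let $\bar I=\{i\in I: h(x^*;\bar x,a,y_i)=z^*\}$ be the set of active cutting-plane constraints, and let $\lambda_i$, $i\in\bar I$, be the Lagrange multipliers of these active constraints in a Karush–Kuhn–Tucker system for this linear program at $(x^*,z^* )$. (i) Then $$m(\bar x)-m(x^* )=f(\bar x)-z^*=\begin{cases}\sum_{i\in\bar I}\lambda_iE_i, & \text{if }\|x^*-\bar x\|_\infty<\Delta,\\[2pt] \sum_{i\in\bar I}\lambda_iE_i+\Delta\Big\|\sum_{i\in\bar I}\lambda_i[s_i+a(y_i-\bar x)]\Big\|_1, & \text{if }\|x^*-\bar x\|_\infty=\Delta.\end{cases}$$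 (ii) Let $C\subseteq\mathbb{R}^n$ be any set with $\bar x\in\mathrm{int}\,C$ and $y_i\in\mathrm{int}\,C$ for all $i\in\bar I$, and suppose additionally that $a$ is such that, with $g(y;x,a)=f(y)+\frac a2\|y-x\|_2^2$, for every $x\in\mathbb{R}^n$ the function $g(\cdot;x,a)$ is the restriction to $C$ of a convex function $H(\cdot;x,a):\mathbb{R}^n\to\mathbb{R}$ satisfying $g(y;x,a)\ge H(y;x,a)$ for all $y\in\mathbb{R}^n$. Then $$\sum_{i\in\bar I}\lambda_i[s_i+a(y_i-\bar x)]\in\partial_{\tilde\epsilon}g(\bar x;\bar x,a),\qquad \tilde\epsilon=\sum_{i\in\bar I}\lambda_iE_i;$$ and furthermore, if $0\in\partial_0 g(\bar x;\bar x,a)$, then $\bar x$ is a global minimizer of $g(\cdot;\bar x,a)$ on $\mathbb{R}^n$.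
   Context: $\partial f$ denotes the basic (limiting) subdifferential. $\|\cdot\|_1,\|\cdot\|_2,\|\cdot\|_\infty$ are the one, two and infinity norms. For a point $y\in\mathrm{int}\,C$, the $\epsilon$-subdifferential of $g(\cdot;\bar x,a)$ is defined as that of the convex function $H(\cdot;\bar x,a)$: $\partial_\epsilon g(y;\bar x,a):=\{v\in\mathbb{R}^n: H(z;\bar x,a)\ge H(y;\bar x,a)+\langle v,z-y\rangle-\epsilon\ \forall z\in\mathbb{R}^n\}$. *)

(* Defs.v *)
From HB Require Import structures.
From mathcomp Require Import all_boot all_order all_algebra.
From mathcomp Require Import reals.
Set Implicit Arguments. Unset Strict Implicit. Unset Printing Implicit Defensive.
Import Order.TTheory GRing.Theory Num.Theory.
Local Open Scope ring_scope.

Section Defs.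
Variables (R : realType) (n : nat).
Notation vec := 'rV[R]_n.

Definition dotv (u v : vec) : R := \sum_(j < n) u ord0 j * v ord0 j.
Definition norm2 (v : vec) : R := Num.sqrt (dotv v v).
Definition norm1 (v : vec) : R := \sum_(j < n) `|v ord0 j|.
Definition norminf (v : vec) : R := \big[Num.max/0]_(j < n) `|v ord0 j|.

Definition frechet_subgrad (f : vec -> R) (x v : vec) : Prop :=
  forall eps : R, 0 < eps -> exists2 delta : R, 0 < delta &
    forall y : vec, norm2 (y - x) < delta ->
      f x + dotv v (y - x) - eps * norm2 (y - x) <= f y.

(* basic (limiting) subgradient: v \in \partial f(x) *)
Definition limiting_subgrad (f : vec -> R) (x v : vec) : Prop :=
  exists (xk vk : nat -> vec),
    (forall k, frechet_subgrad f (xk k) (vk k)) /\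
    (forall eps : R, 0 < eps -> exists N : nat, forall k, (N <= k)%N ->
       [/\ norm2 (xk k - x) < eps, `|f (xk k) - f x| < eps
         & norm2 (vk k - v) < eps]).

Definition interior_pt (C : vec -> Prop) (x : vec) : Prop :=
  exists2 r : R, 0 < r & forall y : vec, norm2 (y - x) < r -> C y.

Definition convex_fun (F : vec -> R) : Prop :=
  forall (x y : vec) (t : R), 0 <= t <= 1 ->
    F (t *: x + (1 - t) *: y) <= t * F x + (1 - t) * F y.

Definition eps_subgrad (F : vec -> R) (y : vec) (eps : R) (v : vec) : Prop :=
  forall z : vec, F y + dotv v (z - y) - eps <= F z.

Definition gfun (f : vec -> R) (a : R) (x y : vec) : R :=
  f y + a / 2 * norm2 (y - x) ^+ 2.

Section CuttingPlane.
Variables (I : finType) (f : vec -> R) (xbar : vec) (a : R) (y s : I -> vec).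

Definition cp_slope (i : I) : vec := s i + a *: (y i - xbar).

Definition cp_h (i : I) (w : vec) : R :=
  f (y i) + a / 2 * norm2 (y i - xbar) ^+ 2 + dotv (cp_slope i) (w - y i).

(* m(w) = max_i h(w; xbar, a, y_i); i0 is any element of I used as seed *)
Definition cp_model (i0 : I) (w : vec) : R :=
  \big[Num.max/cp_h i0 w]_(i : I) cp_h i w.

Definition cp_err (i : I) : R := f xbar - cp_h i xbar.

Definition lp_feasible (Delta : R) (x : vec) (z : R) : Prop :=
  (forall i, cp_h i x <= z) /\ norminf (x - xbar) <= Delta.

Definition lp_optimal (Delta : R) (xs : vec) (zs : R) : Prop :=
  lp_feasible Delta xs zs /\
  forall x z, lp_feasible Delta x z -> zs <= z.

(* KKT system of the LP, written with the box constraint as the 2n linear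
   constraints x_j - xbar_j <= Delta and xbar_j - x_j <= Delta, with
   multipliers lam (cutting planes), mup, mum (box constraints). *)
Definition lp_KKT (Delta : R) (xs : vec) (zs : R)
    (lam : I -> R) (mup mum : 'I_n -> R) : Prop :=
  [/\ lp_feasible Delta xs zs,
      (forall i, 0 <= lam i) /\ (forall j, 0 <= mup j /\ 0 <= mum j),
      1 - \sum_(i : I) lam i = 0 /\
      (forall j : 'I_n,
         \sum_(i : I) lam i * cp_slope i ord0 j + mup j - mum j = 0),
      (forall i, lam i * (cp_h i xs - zs) = 0)
    & (forall j : 'I_n,
         mup j * (xs ord0 j - xbar ord0 j - Delta) = 0 /\
         mum j * (xbar ord0 j - xs ord0 j - Delta) = 0)].

End CuttingPlane.
End Defs.

(* Main.v *)
Require Import Defs.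
From HB Require Import structures.
From mathcomp Require Import all_boot all_order all_algebra.
From mathcomp Require Import reals.
From mathcomp Require Import all_classical all_analysis.
From mathcomp Require Import ring lra.
Import Order.TTheory GRing.Theory Num.Theory.
Import numFieldNormedType.Exports.
Set Implicit Arguments. Unset Strict Implicit.
Local Open Scope classical_set_scope.
Local Open Scope ring_scope.

Section Aux.
Variables (R : realType) (n : nat).
Notation vec := 'rV[R]_n.
Implicit Types (u v w d : vec).

Lemma dotvDl u v w : dotv (u + v) w = dotv u w + dotv v w.
Proof. rewrite /dotv -big_split; apply: eq_bigr => j _; rewrite !mxE /=; ring. Qed.
Lemma dotvDr u v w : dotv w (u + v) = dotv w u + dotv w v.
Proof. rewrite /dotv -big_split; apply: eq_bigr => j _; rewrite !mxE /=; ring. Qed.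
Lemma dotvZl t u w : dotv (t *: u) w = t * dotv u w.
Proof. rewrite /dotv mulr_sumr; apply: eq_bigr => j _; rewrite !mxE /=; ring. Qed.
Lemma dotvZr t u w : dotv w (t *: u) = t * dotv w u.
Proof. rewrite /dotv mulr_sumr; apply: eq_bigr => j _; rewrite !mxE /=; ring. Qed.
Lemma dotvNr u w : dotv w (- u) = - dotv w u.
Proof. rewrite /dotv -sumrN; apply: eq_bigr => j _; rewrite !mxE /=; ring. Qed.
Lemma dotv0l w : dotv 0 w = 0.
Proof. rewrite /dotv big1 // => j _; rewrite !mxE /=; ring. Qed.
Lemma dotv_ge0 u : 0 <= dotv u u.
Proof. by apply: sumr_ge0 => j _; rewrite -expr2 sqr_ge0. Qed.
Lemma norm2_ge0 u : 0 <= norm2 u.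
Proof. exact: sqrtr_ge0. Qed.
Lemma norm2_sq u : norm2 u ^+ 2 = dotv u u.
Proof. by rewrite /norm2 sqr_sqrtr // dotv_ge0. Qed.
Lemma norm20 : norm2 (0 : vec) = 0.
Proof. by rewrite /norm2 dotv0l sqrtr0. Qed.
Lemma norm2Z t u : norm2 (t *: u) = `|t| * norm2 u.
Proof.
by rewrite /norm2 dotvZl dotvZr mulrA -expr2 sqrtrM ?sqr_ge0 // sqrtr_sqr.
Qed.
Lemma coord_le_norm2 u j : `|u ord0 j| <= norm2 u.
Proof.
rewrite -sqrtr_sqr /norm2 ler_sqrt ?dotv_ge0 //.
rewrite /dotv (bigD1 j) //= -expr2 lerDl.
by apply: sumr_ge0 => k _; rewrite -expr2 sqr_ge0.
Qed.
Lemma norm2D_sq u v : norm2 (u + v) ^+ 2 <= 2 * norm2 u ^+ 2 + 2 * norm2 v ^+ 2.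
Proof.
rewrite !norm2_sq /dotv !mulr_sumr -big_split /=.
apply: ler_sum => j _; rewrite !mxE /=.
have := sqr_ge0 (u ord0 j - v ord0 j); rewrite expr2; nra.
Qed.
Lemma norm2D_lt u v r : norm2 u < r / 2 -> norm2 v < r / 2 -> norm2 (u + v) < r.
Proof.
move=> hu hv.
have h0u := norm2_ge0 u; have h0v := norm2_ge0 v; have h0 := norm2_ge0 (u+v).
have := norm2D_sq u v.
have hr : 0 < r by lra.
nra.
Qed.
Lemma dotvC u v : dotv u v = dotv v u.
Proof. by apply: eq_bigr => j _; rewrite mulrC. Qed.

Lemma frechet_convex (G f : vec -> R) (a : R) (xbar p v : vec) (rho : R) :
  convex_fun G -> 0 < rho ->
  (forall w, norm2 (w - p) < rho -> G w = f w + a / 2 * norm2 (w - xbar) ^+ 2) ->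
  frechet_subgrad f p v ->
  forall z, G p + dotv (v + a *: (p - xbar)) (z - p) <= G z.
Proof.
move=> cG rho0 hG hF z.
pose d := z - p; pose N := norm2 d.
have N0 : 0 <= N by apply: norm2_ge0.
have N1 : 0 < N + 1 by lra.
apply/ler_addgt0Pr => e e0.
pose eps := e / (2 * (N + 1)).
have eps0 : 0 < eps by apply: divr_gt0 => //; lra.
have epsE : eps * (2 * (N + 1)) = e by rewrite /eps mulfVK //; lra.
have epsN : eps * N <= e / 2 by nra.
have [delta delta0 hd] := hF eps eps0.
have aN0 : 0 < `|a| * N ^+ 2 + 1.
  have : 0 <= `|a| * N ^+ 2 by apply: mulr_ge0 => //; apply: sqr_ge0.
  lra.
pose t := Num.min 1 (Num.min (delta / (N+1)) (Num.min (rho/(N+1)) (e / (`|a| * N ^+ 2 + 1)))).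
have t0 : 0 < t.
  rewrite /t !lt_min ltr01 !divr_gt0 //.
have [t1 [td [tr te]]] : t <= 1 /\ t <= delta / (N+1) /\ t <= rho / (N+1) /\ t <= e / (`|a| * N ^+ 2 + 1).
  by move: (lexx t); rewrite {2}/t !le_min => /andP[-> /andP[-> /andP[-> ->]]].
rewrite ler_pdivlMr // in td; rewrite ler_pdivlMr // in tr.
rewrite ler_pdivlMr // in te.
pose w := p + t *: d.
have hwp : w - p = t *: d by apply/rowP => j; rewrite !mxE; ring.
have hnw : norm2 (w - p) = t * N by rewrite hwp norm2Z gtr0_norm.
have hwd : norm2 (w - p) < delta by rewrite hnw; nra.
have hwr : norm2 (w - p) < rho by rewrite hnw; nra.
have hFw := hd w hwd.
rewrite hnw hwp dotvZr in hFw.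
have hC : G (t *: z + (1 - t) *: p) <= t * G z + (1 - t) * G p.
  apply: cG; rewrite t1 andbT; lra.
have ew : t *: z + (1 - t) *: p = w by apply/rowP => j; rewrite !mxE; ring.
rewrite ew hG // in hC.
rewrite (hG p) in hC *; last by rewrite subrr norm20.
have hwx : w - xbar = (p - xbar) + t *: d by apply/rowP => j; rewrite !mxE; ring.
have e1 : norm2 (w - xbar) ^+ 2 = dotv (p - xbar) (p - xbar) + 2 * t * dotv (p - xbar) d
    + t ^+ 2 * N ^+ 2.
  rewrite hwx norm2_sq /N norm2_sq /dotv !mulr_sumr -!big_split /=.
  by apply: eq_bigr => j _; rewrite !mxE /=; ring.
have e2 : dotv (v + a *: (p - xbar)) (z - p) = dotv v d + a * dotv (p - xbar) d.
  by rewrite dotvDl dotvZl.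
have e3 : norm2 (p - xbar) ^+ 2 = dotv (p - xbar) (p - xbar) by rewrite norm2_sq.
rewrite e1 e3 in hC; rewrite e2 e3.
have key : 0 <= t * (G z - (f p + a / 2 * dotv (p - xbar) (p - xbar)) - dotv v d
   - a * dotv (p - xbar) d + eps * N - a / 2 * t * N ^+ 2).
  nra.
rewrite pmulr_rge0 // in key.
have tN0 : 0 <= t * N ^+ 2 by apply: mulr_ge0; [lra | apply: sqr_ge0].
have ha : - `|a| <= a by rewrite lerNl -normrN ler_norm.
have : - `|a| * (t * N ^+ 2) <= a * (t * N ^+ 2) by apply: ler_wpM2r.
nra.
Qed.

Definition ecv (X : nat -> vec) (x : vec) :=
  forall j, (fun k => X k ord0 j) @ \oo --> x ord0 j.

Lemma cvg_dotv X Y x y : ecv X x -> ecv Y y ->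
  (fun k => dotv (X k) (Y k)) @ \oo --> dotv x y.
Proof.
move=> hX hY; rewrite /dotv.
apply: (@cvg_big _ _ +%R 0 xpredT (pseudometric_normed_Zmodule.add_continuous)) => // j _.
exact: cvgM.
Qed.

Lemma ecvD X Y x y : ecv X x -> ecv Y y -> ecv (fun k => X k + Y k) (x + y).
Proof.
move=> hX hY j; rewrite mxE.
have -> : (fun k => (X k + Y k) ord0 j) = (fun k => X k ord0 j + Y k ord0 j).
  by apply/funext => k; rewrite mxE.
exact: cvgD.
Qed.

Lemma ecvB X Y x y : ecv X x -> ecv Y y -> ecv (fun k => X k - Y k) (x - y).
Proof.
move=> hX hY j; rewrite !mxE.
have -> : (fun k => (X k - Y k) ord0 j) = (fun k => X k ord0 j - Y k ord0 j).
  by apply/funext => k; rewrite !mxE.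
exact: cvgB.
Qed.

Lemma ecvZ c X x : ecv X x -> ecv (fun k => c *: X k) (c *: x).
Proof.
move=> hX j; rewrite mxE.
have -> : (fun k => (c *: X k) ord0 j) = (fun k => c * X k ord0 j).
  by apply/funext => k; rewrite mxE.
by apply: cvgM => //; apply: cvg_cst.
Qed.

Lemma ecv_cst x : ecv (fun _ => x) x.
Proof. by move=> j; apply: cvg_cst. Qed.

Lemma ecv_norm2 X x : (forall e, 0 < e -> exists N : nat, forall k, (N <= k)%N ->
   norm2 (X k - x) < e) -> ecv X x.
Proof.
move=> h j; apply/cvgrPdistC_lt => e e0.
have [N hN] := h e e0.
exists N => // k /= hk.
apply: le_lt_trans (hN k hk).
by have := coord_le_norm2 (X k - x) j; rewrite !mxE.
Qed.

Lemma limiting_minorant (G f : vec -> R) (a : R) (xbar yi si : vec) (C : vec -> Prop) :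
  convex_fun G -> (forall w, C w -> G w = f w + a / 2 * norm2 (w - xbar) ^+ 2) ->
  interior_pt C yi -> limiting_subgrad f yi si ->
  forall z, f yi + a / 2 * norm2 (yi - xbar) ^+ 2 + dotv (si + a *: (yi - xbar)) (z - yi)
    <= G z.
Proof.
move=> cG hGC [r r0 hr] [xk [vk [hfr hcv]]] z.
have r20 : 0 < r / 2 by apply: divr_gt0.
have step : forall k, norm2 (xk k - yi) < r / 2 ->
   f (xk k) + a / 2 * dotv (xk k - xbar) (xk k - xbar)
   + dotv (vk k + a *: (xk k - xbar)) (z - xk k) <= G z.
  move=> k hk.
  have hC : forall w, norm2 (w - xk k) < r / 2 -> C w.
    move=> w hw; apply: hr.
    have -> : w - yi = (w - xk k) + (xk k - yi) by apply/rowP => j; rewrite !mxE; ring.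
    exact: norm2D_lt.
  have := @frechet_convex G f a xbar (xk k) (vk k) (r / 2) cG r20
    (fun w hw => hGC w (hC w hw)) (hfr k) z.
  rewrite hGC; last by apply: hC; rewrite subrr norm20.
  by rewrite norm2_sq.
have hX : ecv xk yi.
  apply: ecv_norm2 => e e0; have [N hN] := hcv e e0.
  by exists N => k hk; case: (hN k hk).
have hV : ecv vk si.
  apply: ecv_norm2 => e e0; have [N hN] := hcv e e0.
  by exists N => k hk; case: (hN k hk).
have hf : (fun k => f (xk k)) @ \oo --> f yi.
  apply/cvgrPdistC_lt => e e0; have [N hN] := hcv e e0.
  by exists N => // k /= hk; case: (hN k hk).
have hL : (fun k => f (xk k) + a / 2 * dotv (xk k - xbar) (xk k - xbar)
   + dotv (vk k + a *: (xk k - xbar)) (z - xk k)) @ \oo -->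
   f yi + a / 2 * dotv (yi - xbar) (yi - xbar) + dotv (si + a *: (yi - xbar)) (z - yi).
  have hXb := ecvB hX (ecv_cst (x:=xbar)).
  apply: cvgD; first apply: cvgD => //.
    by apply: cvgM; [apply: cvg_cst | apply: cvg_dotv].
  apply: cvg_dotv.
    apply: ecvD => //; apply: ecvZ; apply: ecvB => //; exact: ecv_cst.
  apply: ecvB => //; exact: ecv_cst.
rewrite norm2_sq.
apply: (ler_cvg_to hL (cvg_cst (G z))).
have [N hN] := hcv (r / 2) r20.
exists N => // k /= hk; apply: step; by case: (hN k hk).
Qed.

Lemma dotv0r w : dotv w 0 = 0.
Proof. rewrite /dotv big1 // => j _; rewrite !mxE /=; ring. Qed.

Lemma dotv_sum (I : finType) (c : I -> R) (V : I -> vec) w :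
  dotv (\sum_i c i *: V i) w = \sum_i c i * dotv (V i) w.
Proof.
rewrite /dotv; under eq_bigr do rewrite summxE big_distrl /=.
rewrite exchange_big; apply: eq_bigr => i _; rewrite mulr_sumr.
by apply: eq_bigr => j _; rewrite !mxE /=; ring.
Qed.

Lemma bigmax_ub (T : finType) (F : T -> R) x0 j : F j <= \big[Num.max/x0]_(i : T) F i.
Proof.
have : j \in index_enum T by rewrite mem_index_enum.
elim: (index_enum T) => [//|b r IH]; rewrite inE big_cons /=.
case/orP => [/eqP ->|/IH hj]; rewrite le_max ?lexx //.
by rewrite hj orbT.
Qed.

Lemma bigmax_le (T : finType) (F : T -> R) x0 c : x0 <= c -> (forall i, F i <= c) ->
  \big[Num.max/x0]_(i : T) F i <= c.
Proof.
move=> h0 hF; elim/big_ind: _ => // u v hu hv.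
by rewrite ge_max hu hv.
Qed.
End Aux.

Local Close Scope classical_set_scope.
Unset Implicit Arguments.

Theorem lemma2 (R : realType) (n : nat) (I : finType)
    (f : 'rV[R]_n -> R) (xbar : 'rV[R]_n) (a Delta : R)
    (y s : I -> 'rV[R]_n) (ibar : I)
    (xs : 'rV[R]_n) (zs : R) (lam : I -> R) (mup mum : 'I_n -> R) :
  0 < Delta ->
  (forall i, limiting_subgrad f (y i) (s i)) ->
  y ibar = xbar ->
  (forall i, 0 <= cp_err f xbar a y s i) ->
  lp_optimal f xbar a y s Delta xs zs ->
  lp_KKT f xbar a y s Delta xs zs lam mup mum ->
  (* part (i) *)
  [/\ cp_model f xbar a y s ibar xbar - cp_model f xbar a y s ibar xs
        = f xbar - zs,
      norminf (xs - xbar) < Delta ->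
        f xbar - zs
          = \sum_(i | cp_h f xbar a y s i xs == zs)
              lam i * cp_err f xbar a y s i
    & norminf (xs - xbar) = Delta ->
        f xbar - zs
          = \sum_(i | cp_h f xbar a y s i xs == zs)
              lam i * cp_err f xbar a y s i
            + Delta * norm1 (\sum_(i | cp_h f xbar a y s i xs == zs)
                               lam i *: cp_slope xbar a y s i)]
  /\
  (* part (ii) *)
  (forall (C : 'rV[R]_n -> Prop) (H : 'rV[R]_n -> 'rV[R]_n -> R),
     interior_pt C xbar ->
     (forall i, cp_h f xbar a y s i xs = zs -> interior_pt C (y i)) ->
     (forall x, convex_fun (H x)) ->
     (forall x z, C z -> gfun f a x z = H x z) ->
     (forall x z, H x z <= gfun f a x z) ->
     eps_subgrad (H xbar) xbar
       (\sum_(i | cp_h f xbar a y s i xs == zs) lam i * cp_err f xbar a y s i)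
       (\sum_(i | cp_h f xbar a y s i xs == zs) lam i *: cp_slope xbar a y s i)
     /\
     (eps_subgrad (H xbar) xbar 0 0 ->
        forall z, gfun f a xbar xbar <= gfun f a xbar z)).
Proof.
move=> D0 hsub hyb herr [[hfeas hbnd] hopt] [_ [hlam hmu] [hsum hstat] hcs hbox].
set h := cp_h f xbar a y s.
set E := cp_err f xbar a y s.
set sl := cp_slope xbar a y s.
have hlam0 : forall i, h i xs != zs -> lam i = 0.
  move=> i hne; have /eqP := hcs i.
  by rewrite mulf_eq0 subr_eq0 (negbTE hne) orbF => /eqP.
have rmE : \sum_(i | h i xs == zs) lam i * E i = \sum_i lam i * E i.
  by apply: big_rmcond => i /hlam0 ->; rewrite mul0r.
have rmS : \sum_(i | h i xs == zs) lam i *: sl i = \sum_i lam i *: sl i.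
  by apply: big_rmcond => i /hlam0 ->; rewrite scale0r.
rewrite rmE rmS.
set g := \sum_i lam i *: sl i.
have s1 : \sum_i lam i = 1 by lra.
have hE : forall i, h i xbar = f xbar - E i by move=> i; rewrite /E /h /cp_err; ring.
have hhx : forall i w, h i w = h i xbar + dotv (sl i) (w - xbar).
  move=> i w; rewrite /h /cp_h.
  have -> : w - y i = (xbar - y i) + (w - xbar) by apply/rowP => j; rewrite !mxE; ring.
  rewrite dotvDr; ring.
have CIw : forall w, \sum_i lam i * h i w = f xbar - \sum_i lam i * E i + dotv g (w - xbar).
  move=> w; rewrite /g dotv_sum.
  have -> : f xbar = \sum_i lam i * f xbar.
    by rewrite -mulr_suml; rewrite s1 mul1r.
  rewrite -sumrB -big_split; apply: eq_bigr => i _ /=.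
  rewrite (hhx i w) hE; ring.
have e1 : zs = \sum_i lam i * h i xs.
  have -> : \sum_i lam i * h i xs = \sum_i lam i * zs.
    apply: eq_bigr => i _; have /eqP := hcs i.
    by rewrite mulrBr subr_eq0 => /eqP.
  by rewrite -mulr_suml; rewrite s1 mul1r.
have CI : f xbar - zs = \sum_i lam i * E i - dotv g (xs - xbar).
  rewrite e1 CIw; ring.
have hgj : forall j, g ord0 j = mum j - mup j.
  move=> j; rewrite /g summxE.
  under eq_bigr do rewrite mxE.
  have := hstat j; lra.
have hdg : dotv g (xs - xbar) = \sum_(j < n) (mum j - mup j) * (xs ord0 j - xbar ord0 j).
  by apply: eq_bigr => j _; rewrite hgj !mxE.
have hterm : forall j, (mup j - mum j) * (xs ord0 j - xbar ord0 j) = Delta * `|mum j - mup j|.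
  move=> j; have [hb1 hb2] := hbox j; have [hp hm] := hmu j.
  move/eqP: hb1; rewrite mulf_eq0 => /orP [/eqP hp0 | /eqP hd1].
    move/eqP: hb2; rewrite mulf_eq0 => /orP [/eqP hm0 | /eqP hd2].
      by rewrite hp0 hm0 subrr normr0; ring.
    rewrite hp0 sub0r subr0 ger0_norm //.
    have -> : xs ord0 j - xbar ord0 j = - Delta by lra.
    ring.
  move/eqP: hb2; rewrite mulf_eq0 => /orP [/eqP hm0 | /eqP hd2]; last by lra.
  rewrite hm0 subr0 sub0r normrN ger0_norm //.
  have -> : xs ord0 j - xbar ord0 j = Delta by lra.
  ring.
split; [split|].
-
  have hibar : h ibar xbar = f xbar.
    by rewrite /h /cp_h hyb subrr norm20 dotv0r expr2 !mul0r mulr0 !addr0.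
  have mx : cp_model f xbar a y s ibar xbar = f xbar.
    apply/eqP; rewrite eq_le; apply/andP; split.
      apply: bigmax_le; first by rewrite -/h hibar.
      move=> i; have := herr i; rewrite -/E -/h hE; lra.
    by rewrite -{1}hibar; apply: bigmax_ub.
  have ms : cp_model f xbar a y s ibar xs = zs.
    apply/eqP; rewrite eq_le; apply/andP; split.
      by apply: bigmax_le; first apply: hfeas.
    apply: (hopt xs); split => // i; exact: bigmax_ub.
  by rewrite mx ms.
- move=> hint.
  suff hz : dotv g (xs - xbar) = 0 by rewrite CI hz subr0.
  rewrite hdg big1 // => j _.
  have hj : `|(xs - xbar) ord0 j| < Delta.
    apply: le_lt_trans hint; rewrite /norminf.
    exact: (@bigmax_ub _ _ (fun k => `|(xs - xbar) ord0 k|) 0 j).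
  rewrite !mxE in hj.
  have h1 := ler_norm (xs ord0 j - xbar ord0 j).
  have h2 := ler_norm (- (xs ord0 j - xbar ord0 j)); rewrite normrN in h2.
  have [hb1 hb2] := hbox j.
  move/eqP: hb1; rewrite mulf_eq0 => /orP [/eqP hp0|/eqP]; last by lra.
  move/eqP: hb2; rewrite mulf_eq0 => /orP [/eqP hm0|/eqP]; last by lra.
  by rewrite hp0 hm0 subrr mul0r.
- move=> hD.
  rewrite CI hdg /norm1 mulr_sumr -sumrN; congr (_ + _).
  apply: eq_bigr => j _; rewrite hgj -hterm; ring.
move=> C H hCx hCi cH hCeq hHle.
have hGC : forall w, C w -> H xbar w = f w + a / 2 * norm2 (w - xbar) ^+ 2.
  by move=> w hw; rewrite -hCeq.
have hgx : gfun f a xbar xbar = f xbar.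
  by rewrite /gfun subrr norm20 expr2 mul0r mulr0 addr0.
have hGx : H xbar xbar = f xbar.
  case: hCx => r r0 hr; rewrite -hCeq ?hgx //.
  by apply: hr; rewrite subrr norm20.
split.
- move=> z; rewrite hGx.
  have hle : \sum_i lam i * h i z <= H xbar z.
    apply: (@le_trans _ _ (\sum_i lam i * H xbar z)).
      apply: ler_sum => i _.
      have [hP|hP] := boolP (h i xs == zs).
        apply: ler_wpM2l; first exact: hlam.
        exact: (limiting_minorant (cH xbar) hGC (hCi i (eqP hP)) (hsub i) z).
      by rewrite (hlam0 i hP) !mul0r.
    by rewrite -mulr_suml s1 mul1r.
  rewrite CIw in hle; lra.
- move=> h0 z; have := h0 z; rewrite hGx dotv0l subr0 addr0 => hz.
  have := hHle xbar z; rewrite hgx; lra.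
Qed.
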